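(* Let $n\ge 3$ and let $\mathcal{H}$ be the associating hypergraph on $M(D_n,2)$. Then the matching number is $\upsilon(\mathcal{H})=n+\lfloor n/3\rfloor$.
   Context: $D_n=\langle x,y\mid x^n=y^2=1,\ xy=yx^{-1}\rangle$. $M(D_n,2)=\{(g,\alpha): g\in D_n,\ \alpha\in\mathbb{Z}_2\}$ with $(g_1,\alpha_1)\circ(g_2,\alpha_2)=(g_1^{1-\alpha_2} g_2^{(-1)^{\alpha_1}} g_1^{\alpha_2},\ \alpha_1+\alpha_2)$. The associating hypergraph $\mathcal{H}$ has vertex set $M(D_n,2)$ ($4n$ vertices), and a 3-element set $\{a,b,c\}$ of distinct elements is a hyperedge when $(a\circ b)\circ c=a\circ(b\circ c)$. A matching is a set of pairwise vertex-disjoint hyperedges; $\upsilon(\mathcal{H})$ is the maximum size of a matching. *)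

(* Defs.v *)
From mathcomp Require Import all_boot all_order all_algebra.
Set Implicit Arguments. Unset Strict Implicit. Unset Printing Implicit Defensive.
Import GRing.Theory.
Local Open Scope ring_scope.

(* Dihedral group D_n = <x,y | x^n = y^2 = 1, xy = yx^{-1}>, n >= 3 (so 'Z_n = Z/nZ).
   The element (k, s) represents x^k y^s. *)
Definition dih (n : nat) : finType := ('Z_n * bool)%type.

(* (x^a y^s)(x^b y^t) = x^(a + (-1)^s b) y^(s+t) *)
Definition dmul (n : nat) (g h : dih n) : dih n :=
  (g.1 + (if g.2 then - h.1 else h.1), g.2 (+) h.2).

(* (x^a)^-1 = x^-a ; (x^a y)^-1 = x^a y *)
Definition dinv (n : nat) (g : dih n) : dih n :=
  if g.2 then g else (- g.1, false).

(* M(D_n,2) = D_n x Z_2, with Z_2 represented by bool (addition = xor). *)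
Definition Mvert (n : nat) : finType := (dih n * bool)%type.

(* (g1,a1) o (g2,a2) = (g1^{1-a2} g2^{(-1)^a1} g1^{a2}, a1 + a2) *)
Definition Mop (n : nat) (p q : Mvert n) : Mvert n :=
  let: (g1, a1) := p in let: (g2, a2) := q in
  let g2' := if a1 then dinv g2 else g2 in
  (if a2 then dmul g2' g1 else dmul g1 g2', a1 (+) a2).

Definition is_hyperedge (n : nat) (e : {set Mvert n}) : bool :=
  (#|e| == 3%N) &&
  [exists a : Mvert n, exists b : Mvert n, exists c : Mvert n,
     (e == [set a; b; c]) && (Mop (Mop a b) c == Mop a (Mop b c))].

Definition is_matching (n : nat) (M : {set {set Mvert n}}) : bool :=
  [forall e in M, is_hyperedge e] &&
  [forall e in M, forall f in M, (e != f) ==> [disjoint e & f]].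

Definition matching_number (n : nat) : nat :=
  \max_(M : {set {set Mvert n}} | is_matching M) #|M|.

(* Main.v *)
Require Import Defs.
From mathcomp Require Import all_boot all_order all_algebra.
From mathcomp Require Import ring zify.
Import GRing.Theory.
Set Implicit Arguments. Unset Strict Implicit.
Definition wthn {n} (S : {set Mvert n}) (M : {set {set Mvert n}}) :=
  is_matching M /\ (forall e, e \in M -> e \subset S).

Lemma hyper_card n (e : {set Mvert n}) : is_hyperedge e -> #|e| = 3.
Proof. by case/andP=> /eqP. Qed.

Lemma wthn_sub n (S S' : {set Mvert n}) M : S \subset S' -> wthn S M -> wthn S' M.
Proof. move=> sS [h1 h2]; split=> // e /h2 /subset_trans; exact. Qed.

Lemma wthn0 n (S : {set Mvert n}) : wthn S set0.
Proof.
split; last by move=> e; rewrite inE.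
by apply/andP; split; apply/forallP=> e; rewrite inE.
Qed.

Lemma wthn1 n (e : {set Mvert n}) : is_hyperedge e -> wthn e [set e].
Proof.
move=> he; split; last by move=> f; rewrite inE => /eqP->.
apply/andP; split; apply/forallP=> f; apply/implyP; rewrite inE => /eqP-> //.
by apply/forallP=> g; apply/implyP; rewrite inE => /eqP->; rewrite eqxx.
Qed.

Lemma wthn_comb n (X Y : {set Mvert n}) M1 M2 :
  [disjoint X & Y] -> wthn X M1 -> wthn Y M2 ->
  wthn (X :|: Y) (M1 :|: M2) /\ #|M1 :|: M2| = (#|M1| + #|M2|)%N.
Proof.
move=> dXY [/andP[/forallP h1 /forallP d1] s1] [/andP[/forallP h2 /forallP d2] s2].
have dM : [disjoint M1 & M2].
  apply/pred0P=> e /=; apply/negbTE/negP=> /andP[e1 e2].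
  have := h1 e; rewrite e1 /= => /hyper_card.
  have : e \subset X :&: Y by rewrite subsetI s1 ?s2.
  by rewrite (disjoint_setI0 dXY) => /subset_leq_card; rewrite cards0 => H1 H2; rewrite H2 in H1.
split; last by rewrite cardsU (disjoint_setI0 dM) cards0 subn0.
split; last first.
  move=> e; rewrite inE => /orP[/s1|/s2] H; apply: subset_trans H _;
  by rewrite ?subsetUl ?subsetUr.
apply/andP; split; apply/forallP=> e; apply/implyP; rewrite inE.
  by case/orP=> H; [have := h1 e | have := h2 e]; rewrite H.
move=> He; apply/forallP=> f; apply/implyP; rewrite inE => Hf; apply/implyP=> nef.
case/orP: He => He; case/orP: Hf => Hf.
- by have := d1 e; rewrite He /= => /forallP /(_ f); rewrite Hf nef.
- exact: disjointW (s1 _ He) (s2 _ Hf) dXY.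
- by apply: disjointW (s2 _ He) (s1 _ Hf) _; rewrite disjoint_sym.
- by have := d2 e; rewrite He /= => /forallP /(_ f); rewrite Hf nef.
Qed.

Lemma hyper3 n (a b c : Mvert n) : a != b -> a != c -> b != c ->
  Mop (Mop a b) c = Mop a (Mop b c) -> is_hyperedge [set a; b; c].
Proof.
move=> ab ac bc H; apply/andP; split.
  rewrite setUC cardsU1 cards2 !inE negb_or ab (eq_sym c) ac (eq_sym c) bc; by [].
by apply/existsP; exists a; apply/existsP; exists b; apply/existsP; exists c; rewrite eqxx H eqxx.
Qed.

Definition clique {n} (S : {set Mvert n}) := forall a b c, a \in S -> b \in S -> c \in S ->
  Mop (Mop a b) c = Mop a (Mop b c).

Lemma clique_sub n (S S' : {set Mvert n}) : S' \subset S -> clique S -> clique S'.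
Proof. by move=> /subsetP sS cS a b c /sS ? /sS ? /sS ?; apply: cS. Qed.

Lemma clique_match n m (S : {set Mvert n}) : #|S| = m -> clique S ->
  exists M, wthn S M /\ #|M| = (m %/ 3)%N.
Proof.
elim: m {-2}m (leqnn m) S => [|m IH] k lek S cS clS.
  by exists set0; rewrite cards0; split; [apply: wthn0 | move: lek; rewrite leqn0 => /eqP->].
case: (ltnP k 3) => k3.
  by exists set0; rewrite cards0 divn_small //; split => //; apply: wthn0.
have [x xS] : exists x, x \in S by apply/set0Pn; rewrite -card_gt0 cS; case: k k3 {lek cS}.
have [y yS] : exists y, y \in S :\ x.
  apply/set0Pn; rewrite -card_gt0; have := cardsD1 x S; rewrite xS cS => h.
  by move: k3; rewrite h; case: #|_|.
have [z zS] : exists z, z \in S :\ x :\ y.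
  apply/set0Pn; rewrite -card_gt0.
  have := cardsD1 x S; have := cardsD1 y (S :\ x); rewrite xS yS cS => h1 h2.
  by move: k3; rewrite h2 h1; case: #|_|.
move: yS zS; rewrite !inE => /andP[yx yS] /andP[zy /andP[zx zS]].
set e := [set x; y; z].
have eS : e \subset S by apply/subsetP=> w; rewrite !inE => /orP[/orP[]|] /eqP->.
have he : is_hyperedge e by apply: hyper3; rewrite 1?eq_sym // clS.
have ce : #|S :\: e| = (k - 3)%N by rewrite cardsD (setIidPr eS) (hyper_card he) cS.
have km : (k - 3 <= m)%N.
  lia.
have [M' [wM' cM']] := IH (k - 3)%N km (S :\: e) ce (clique_sub (subsetDl _ _) clS).
have dj : [disjoint e & S :\: e] by rewrite disjoints_subset setCD subsetUr.
have [w c] := wthn_comb dj (wthn1 he) wM'.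
exists ([set e] :|: M'); split.
  by apply: wthn_sub w; rewrite subUset eS subsetDl.
by rewrite c cards1 cM'; lia.
Qed.

Lemma card_Mvert n : (1 < n)%N -> #|Mvert n| = (4 * n)%N.
Proof.
move=> n1; rewrite /Mvert /dih !card_prod card_bool card_ord Zp_cast //; lia.
Qed.

Lemma upper n (M : {set {set Mvert n}}) : (1 < n)%N -> is_matching M -> (#|M| * 3 <= 4 * n)%N.
Proof.
move=> n1 /andP[/forallP h d].
have tM : trivIset M.
  apply/trivIsetP=> A B AM BM AB; move/forallP: d => /(_ A); rewrite AM /=.
  by move/forallP/(_ B); rewrite BM AB.
have : (\sum_(B in M) #|B| = #|M| * 3)%N.
  rewrite -sum_nat_const; apply: eq_bigr => B BM; apply: hyper_card.
  by have := h B; rewrite BM.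
move: tM; rewrite /trivIset => /eqP -> <-; rewrite -card_Mvert //; exact: max_card.
Qed.

Lemma dmulA n (a b c : dih n) : dmul (dmul a b) c = dmul a (dmul b c).
Proof.
case: a b c => [ka [] ] [kb [] ] [kc [] ]; rewrite /dmul /=; congr (_,_); ring.
Qed.

Definition Aset n : {set Mvert n} := [set v | ~~ v.2].
Definition Bset n : {set Mvert n} := [set v | v.2 && ~~ v.1.2].
Definition Cset n : {set Mvert n} := [set v | v.2 && v.1.2].

Lemma cliqueA n : clique (Aset n).
Proof.
move=> [a [] ] [b [] ] [c [] ]; rewrite !inE //= => _ _ _.
by rewrite /Mop dmulA.
Qed.

Lemma cliqueB n : clique (Bset n).
Proof.
move=> [[ka [] ] [] ] [[kb [] ] [] ] [[kc [] ] [] ]; rewrite !inE //= => _ _ _.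
rewrite /Mop /dmul /dinv /=; congr (_,_,_); ring.
Qed.

Lemma cliqueC n : clique (Cset n).
Proof.
move=> [[ka [] ] [] ] [[kb [] ] [] ] [[kc [] ] [] ]; rewrite !inE //= => _ _ _.
rewrite /Mop /dmul /dinv /=; congr (_,_,_); ring.
Qed.

Lemma assocAAB n (ka kb kc : 'Z_n) :
  let a := ((ka, false), false) : Mvert n in
  let b := ((kb, false), false) : Mvert n in
  let c := ((kc, false), true) : Mvert n in
  Mop (Mop a b) c = Mop a (Mop b c).
Proof. rewrite /Mop /dmul /dinv /=; congr (_,_,_); ring. Qed.

Lemma assocABB n (ka kb kc : 'Z_n) :
  let a := ((ka, false), false) : Mvert n in
  let b := ((kb, false), true) : Mvert n in
  let c := ((kc, false), true) : Mvert n in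
  Mop (Mop a b) c = Mop a (Mop b c).
Proof. rewrite /Mop /dmul /dinv /=; congr (_,_,_); ring. Qed.

Lemma assocACC n (ka kb kc : 'Z_n) :
  let a := ((ka, false), false) : Mvert n in
  let b := ((kb, true), true) : Mvert n in
  let c := ((kc, true), true) : Mvert n in
  Mop (Mop a b) c = Mop a (Mop b c).
Proof. rewrite /Mop /dmul /dinv /=; congr (_,_,_); ring. Qed.

Lemma cardA n : (1 < n)%N -> #|Aset n| = (2 * n)%N.
Proof.
move=> n1; have -> : Aset n = setX [set: dih n] [set false].
  by apply/setP=> [[g []]]; rewrite !inE.
rewrite cardsX cardsT cards1 /dih card_prod card_bool card_ord Zp_cast //; lia.
Qed.

Lemma cardB n : (1 < n)%N -> #|Bset n| = n.
Proof.
move=> n1; have -> : Bset n = setX (setX [set: 'Z_n] [set false]) [set true].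
  by apply/setP=> [[[k []] []]]; rewrite !inE.
rewrite !cardsX cardsT !cards1 card_ord Zp_cast //; lia.
Qed.

Lemma cardCs n : (1 < n)%N -> #|Cset n| = n.
Proof.
move=> n1; have -> : Cset n = setX (setX [set: 'Z_n] [set true]) [set true].
  by apply/setP=> [[[k []] []]]; rewrite !inE.
rewrite !cardsX cardsT !cards1 card_ord Zp_cast //; lia.
Qed.
Lemma djU n (X Y Z : {set Mvert n}) :
  [disjoint X & Z] -> [disjoint Y & Z] -> [disjoint X :|: Y & Z].
Proof. by rewrite !disjoints_subset subUset => -> ->. Qed.

Lemma dj3 n (a b c : Mvert n) (S : {set Mvert n}) :
  a \notin S -> b \notin S -> c \notin S -> [disjoint S & [set a; b; c]].
Proof.
move=> ha hb hc; rewrite disjoint_sym disjoints_subset.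
by apply/subsetP=> v; rewrite !inE => /orP[/orP[]|] /eqP->; rewrite ?inE.
Qed.

Lemma cl_plus n (X S : {set Mvert n}) M : wthn X M -> clique S -> [disjoint X & S] ->
  exists M', wthn (X :|: S) M' /\ #|M'| = (#|M| + #|S| %/ 3)%N.
Proof.
move=> wM cS dXS; have [M2 [w2 c2]] := clique_match (erefl _) cS.
have [w c] := wthn_comb dXS wM w2; exists (M :|: M2); by rewrite c c2.
Qed.

Lemma djAB n : [disjoint Aset n & Bset n].
Proof. by rewrite disjoints_subset; apply/subsetP=> v; rewrite !inE => /negbTE->. Qed.
Lemma djAC n : [disjoint Aset n & Cset n].
Proof. by rewrite disjoints_subset; apply/subsetP=> v; rewrite !inE => /negbTE->. Qed.
Lemma djBC n : [disjoint Bset n & Cset n].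
Proof. by rewrite disjoints_subset; apply/subsetP=> v; rewrite !inE => /andP[_ /negbTE->]; rewrite andbF. Qed.

Lemma z1 n : (1%R : 'Z_n) != 0%R.
Proof. exact: oner_neq0. Qed.

Lemma case1 n : (1 < n)%N -> exists M : {set {set Mvert n}}, is_matching M /\
  #|M| = ((2 * n - 2) %/ 3 + (n - 1) %/ 3 + n %/ 3 + 1)%N.
Proof.
move=> n1.
pose a1 : Mvert n := ((0%R, false), false).
pose a2 : Mvert n := ((1%R, false), false).
pose b : Mvert n := ((0%R, false), true).
pose A' := Aset n :\ a1 :\ a2. pose B' := Bset n :\ b.
have ne : a2 != a1 by rewrite /a1 /a2 !xpair_eqE z1.
have cA : #|A'| = (2 * n - 2)%N.
  have := cardsD1 a1 (Aset n); have := cardsD1 a2 (Aset n :\ a1).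
  rewrite /A' cardA // !inE ne /=; lia.
have cB : #|B'| = (n - 1)%N.
  have := cardsD1 b (Bset n); rewrite /B' cardB // !inE /=; lia.
have sA : A' \subset Aset n by apply: subset_trans (subsetDl _ _) (subsetDl _ _).
have sB : B' \subset Bset n by apply: subsetDl.
have d0 : [disjoint (set0 : {set Mvert n}) & A'] by rewrite disjoints_subset sub0set.
have [M1 [w1 c1]] := cl_plus (wthn0 set0) (clique_sub sA (@cliqueA n)) d0.
have d1 : [disjoint set0 :|: A' & B'].
  by rewrite set0U; apply: disjointW sA sB (@djAB n).
have [M2 [w2 c2]] := cl_plus w1 (clique_sub sB (@cliqueB n)) d1.
have d2 : [disjoint set0 :|: A' :|: B' & Cset n].
  by rewrite set0U; apply: djU; [apply: disjointWl sA (@djAC n) | apply: disjointWl sB (@djBC n)].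
have [M3 [w3 c3]] := cl_plus w2 (@cliqueC n) d2.
have d3 : [disjoint set0 :|: A' :|: B' :|: Cset n & [set a1; a2; b]].
  by apply: dj3; rewrite !inE ?eqxx ?ne //= andbF.
have he : is_hyperedge [set a1; a2; b].
  by apply: hyper3; [rewrite eq_sym ne | rewrite /a1 /b !xpair_eqE | rewrite /a2 /b !xpair_eqE andbF | apply: assocAAB].
have [[w c] _] := (wthn_comb d3 w3 (wthn1 he), 0).
exists (M3 :|: [set [set a1; a2; b]]); split; first by case: w.
by rewrite c c3 c2 c1 cards0 cards1 cA cB cardCs //; lia.
Qed.

Lemma case0 n : (1 < n)%N -> exists M : {set {set Mvert n}}, is_matching M /\
  #|M| = ((2 * n) %/ 3 + n %/ 3 + n %/ 3)%N.
Proof.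
move=> n1.
have d0 : [disjoint (set0 : {set Mvert n}) & Aset n] by rewrite disjoints_subset sub0set.
have [M1 [w1 c1]] := cl_plus (wthn0 set0) (@cliqueA n) d0.
have d1 : [disjoint set0 :|: Aset n & Bset n] by rewrite set0U; apply: djAB.
have [M2 [w2 c2]] := cl_plus w1 (@cliqueB n) d1.
have d2 : [disjoint set0 :|: Aset n :|: Bset n & Cset n].
  by rewrite set0U; apply: djU; [apply: djAC | apply: djBC].
have [M3 [[w3 _] c3]] := cl_plus w2 (@cliqueC n) d2.
exists M3; split => //.
by rewrite c3 c2 c1 cards0 cardA // cardB // cardCs.
Qed.

Lemma case2 n : (1 < n)%N -> exists M : {set {set Mvert n}}, is_matching M /\
  #|M| = ((2 * n - 2) %/ 3 + (n - 2) %/ 3 + (n - 2) %/ 3 + 2)%N.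
Proof.
move=> n1.
have z1' : (1%R == 0%R :> 'Z_n) = false by apply/negbTE/z1.
have z1'' : (0%R == 1%R :> 'Z_n) = false by rewrite eq_sym.
pose a1 : Mvert n := ((0%R, false), false).
pose a2 : Mvert n := ((1%R, false), false).
pose b1 : Mvert n := ((0%R, false), true).
pose b2 : Mvert n := ((1%R, false), true).
pose c1 : Mvert n := ((0%R, true), true).
pose c2 : Mvert n := ((1%R, true), true).
pose A' := Aset n :\ a1 :\ a2. pose B' := Bset n :\ b1 :\ b2.
pose C' := Cset n :\ c1 :\ c2.
have cA : #|A'| = (2 * n - 2)%N.
  have := cardsD1 a1 (Aset n); have := cardsD1 a2 (Aset n :\ a1).
  rewrite /A' cardA // !inE !xpair_eqE z1' /=; lia.
have cB : #|B'| = (n - 2)%N.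
  have := cardsD1 b1 (Bset n); have := cardsD1 b2 (Bset n :\ b1).
  rewrite /B' cardB // !inE !xpair_eqE z1' /=; lia.
have cC : #|C'| = (n - 2)%N.
  have := cardsD1 c1 (Cset n); have := cardsD1 c2 (Cset n :\ c1).
  rewrite /C' cardCs // !inE !xpair_eqE z1' /=; lia.
have sA : A' \subset Aset n by apply: subset_trans (subsetDl _ _) (subsetDl _ _).
have sB : B' \subset Bset n by apply: subset_trans (subsetDl _ _) (subsetDl _ _).
have sC : C' \subset Cset n by apply: subset_trans (subsetDl _ _) (subsetDl _ _).
have d0 : [disjoint (set0 : {set Mvert n}) & A'] by rewrite disjoints_subset sub0set.
have [M1 [w1 c1']] := cl_plus (wthn0 set0) (clique_sub sA (@cliqueA n)) d0.
have d1 : [disjoint set0 :|: A' & B'].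
  by rewrite set0U; apply: disjointW sA sB (@djAB n).
have [M2 [w2 c2']] := cl_plus w1 (clique_sub sB (@cliqueB n)) d1.
have d2 : [disjoint set0 :|: A' :|: B' & C'].
  by rewrite set0U; apply: djU; [apply: disjointW sA sC (@djAC n) | apply: disjointW sB sC (@djBC n)].
have [M3 [w3 c3]] := cl_plus w2 (clique_sub sC (@cliqueC n)) d2.
have d3 : [disjoint set0 :|: A' :|: B' :|: C' & [set a1; b1; b2]].
  by apply: dj3; rewrite !inE ?eqxx //= ?xpair_eqE ?z1' ?z1'' ?andbF.
have he : is_hyperedge [set a1; b1; b2].
  by apply: hyper3; [| | rewrite /b1 /b2 !xpair_eqE z1'' | apply: assocABB].
have [w4 c4] := wthn_comb d3 w3 (wthn1 he).
have d4 : [disjoint set0 :|: A' :|: B' :|: C' :|: [set a1; b1; b2] & [set a2; c1; c2]].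
  by apply: dj3; rewrite !inE ?eqxx //= ?xpair_eqE ?z1' ?z1'' ?andbF.
have he2 : is_hyperedge [set a2; c1; c2].
  by apply: hyper3; [| | rewrite /c1 /c2 !xpair_eqE z1'' | apply: assocACC].
have [[w5 _] c5] := wthn_comb d4 w4 (wthn1 he2).
exists (M3 :|: [set [set a1; b1; b2]] :|: [set [set a2; c1; c2]]); split => //.
by rewrite c5 c4 c3 c2' c1' cards0 !cards1 cA cB cC add0n -addnA.
Qed.

Lemma ar0 n : n %% 3 = 0 -> ((2 * n) %/ 3 + n %/ 3 + n %/ 3)%N = (n + n %/ 3)%N.
Proof. lia. Qed.
Lemma ar1 n : n %% 3 = 1 -> ((2 * n - 2) %/ 3 + (n - 1) %/ 3 + n %/ 3 + 1)%N = (n + n %/ 3)%N.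
Proof. lia. Qed.
Lemma ar2 n : n %% 3 = 2 -> ((2 * n - 2) %/ 3 + (n - 2) %/ 3 + (n - 2) %/ 3 + 2)%N = (n + n %/ 3)%N.
Proof. lia. Qed.
Lemma arU n m : (m * 3 <= 4 * n)%N -> (m <= n + n %/ 3)%N.
Proof. lia. Qed.

Theorem mainTheorem10 (n : nat) : (3 <= n)%N ->
  matching_number n = (n + n %/ 3)%N.
Proof.
move=> n3; have n1 : (1 < n)%N by apply: leq_trans n3.
apply/eqP; rewrite eqn_leq; apply/andP; split.
  by apply/bigmax_leqP => M hM; apply: arU; apply: upper.
have : (n %% 3 < 3)%N by rewrite ltn_mod.
case e: (n %% 3) => [|[|[|k]]] // _.
- have [M [hM cM]] := case0 n1; apply: leq_trans (leq_bigmax_cond _ hM).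
  by rewrite cM ar0.
- have [M [hM cM]] := case1 n1; apply: leq_trans (leq_bigmax_cond _ hM).
  by rewrite cM ar1.
- have [M [hM cM]] := case2 n1; apply: leq_trans (leq_bigmax_cond _ hM).
  by rewrite cM ar2.
Qed.
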